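(* Let $\rho$ be the automorphism of $\mathcal A_\theta^{alg}$ with $\rho\cdot U_1=U_2^{-1}$, $\rho\cdot U_2=U_1$, generating a group $\mathbb Z_4$. Let $H^0(\mathcal A_\theta^{alg},{}_{\rho}\mathcal A_\theta^{alg\ast})$ be the space of formal series $\varphi=\sum\varphi_{n,m}U_1^nU_2^m$ with $(\rho\cdot a)\varphi=\varphi a$ for all $a\in\mathcal A_\theta^{alg}$, with $\mathbb Z_4$ acting by applying $\rho$ termwise. Then $H^0(\mathcal A_\theta^{alg},{}_{\rho}\mathcal A_\theta^{alg\ast})^{\mathbb Z_4}\cong\mathbb C^2$.
   Context: Let $\theta\in\mathbb R\setminus\mathbb Q$, $\lambda=e^{2\pi i\theta}$. $\mathcal A_\theta^{alg}$ is the complex algebra of finite sums $\sum a_{n,m}U_1^nU_2^m$ with $U_1,U_2$ invertible and $U_2U_1=\lambda U_1U_2$; formal series $\sum_{(n,m)\in\mathbb Z^2}\varphi_{n,m}U_1^nU_2^m$ with arbitrary coefficients form an $\mathcal A_\theta^{alg}$-bimodule via multiplication. Termwise action: $\rho\cdot\sum\varphi_{n,m}U_1^nU_2^m=\sum\varphi_{n,m}\,\rho\cdot(U_1^nU_2^m)$. *)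

(* Defs.v *)
From mathcomp Require Import all_boot all_order all_algebra.
From mathcomp Require Import reals trigo.
From mathcomp Require Import complex.
Set Implicit Arguments. Unset Strict Implicit. Unset Printing Implicit Defensive.
Import Order.TTheory GRing.Theory Num.Theory.
Local Open Scope ring_scope.

Section NCTorus.
Variable R : realType.
Variable theta : R.

Definition lam : R[i] := Complex (cos (2 * pi * theta)) (sin (2 * pi * theta)).

(** An element of A_theta^alg, written as a finite sum
    sum_k c_k U1^(p_k) U2^(q_k): a finite list of terms ((p,q), c). *)
Definition alg_el := seq ((int * int) * R[i]).

(** Formal series sum_{(n,m)} phi(n,m) U1^n U2^m with arbitrary coefficients. *)
Definition fseries := int -> int -> R[i].

(** Left multiplication a * phi, using U2^q U1^n = lam^(q n) U1^n U2^q :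
    c U1^p U2^q * phi(n',m') U1^n' U2^m' = c lam^(q n') phi(n',m') U1^(p+n') U2^(q+m'). *)
Definition lmul (a : alg_el) (phi : fseries) : fseries :=
  fun n m => \sum_(t <- a)
     t.2 * lam ^ (t.1.2 * (n - t.1.1)) * phi (n - t.1.1) (m - t.1.2).

(** Right multiplication phi * a:
    phi(n',m') U1^n' U2^m' * c U1^p U2^q = c lam^(m' p) phi(n',m') U1^(n'+p) U2^(m'+q). *)
Definition rmul (phi : fseries) (a : alg_el) : fseries :=
  fun n m => \sum_(t <- a)
     t.2 * lam ^ ((m - t.1.2) * t.1.1) * phi (n - t.1.1) (m - t.1.2).

(** The automorphism rho : U1 |-> U2^-1, U2 |-> U1, on monomials:
    rho(U1^n U2^m) = U2^(-n) U1^m = lam^(-n m) U1^m U2^(-n). *)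
Definition rho_alg (a : alg_el) : alg_el :=
  [seq ((t.1.2, - t.1.1), t.2 * lam ^ (- (t.1.1 * t.1.2))) | t <- a].

(** Termwise action of rho on formal series:
    rho . sum phi(n,m) U1^n U2^m = sum phi(n,m) lam^(-n m) U1^m U2^(-n),
    so the coefficient of U1^p U2^q is phi(-q,p) lam^(q p). *)
Definition rho_ser (phi : fseries) : fseries :=
  fun p q => lam ^ (q * p) * phi (- q) p.

Definition H0_rho (phi : fseries) : Prop :=
  forall a : alg_el, lmul (rho_alg a) phi = rmul phi a.

Definition rho_invariant (phi : fseries) : Prop := rho_ser phi = phi.

Definition H0_rho_Z4 (phi : fseries) : Prop := H0_rho phi /\ rho_invariant phi.

End NCTorus.

(* Main.v *)
Require Import Defs.
From mathcomp Require Import all_boot all_order all_algebra.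
From mathcomp Require Import reals trigo.
From mathcomp Require Import complex.
From mathcomp Require Import boolp.
From mathcomp Require Import ring lra zify.
Import Order.TTheory GRing.Theory Num.Theory.
Local Open Scope ring_scope.

Section Proof.
Variable R : realType.
Variable theta : R.

Let L := lam theta.

Lemma lam_unit : L \is a GRing.unit.
Proof.
rewrite unitfE /L /lam; apply/eqP => /eqP.
rewrite eq_complex /= => /andP [/eqP c0 /eqP s0].
have := cos2Dsin2 (2 * pi * theta); rewrite c0 s0 expr0n /= addr0 => /eqP.
by rewrite eq_sym oner_eq0.
Qed.

Lemma LD (x y : int) : L ^ x * L ^ y = L ^ (x + y).
Proof. by rewrite exprzDr // lam_unit. Qed.

Definition ee (k : int) : int := ((k * k) %/ 4)%Z.

Lemma eeD k p : ee (k + 2 * p) = ee k + p * (k + p).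
Proof.
rewrite /ee.
have -> : (k + 2 * p) * (k + 2 * p) = (p * (k + p)) * 4 + k * k by ring.
by rewrite divzMDl // addrC.
Qed.

Definition F (b : int) (k : int) : R[i] :=
  if ((k %% 2)%Z == b) then L ^ ee k else 0.

Lemma FD b k p : F b (k + 2 * p) = L ^ (p * (k + p)) * F b k.
Proof.
rewrite /F.
have -> : ((k + 2 * p) %% 2)%Z = (k %% 2)%Z.
  by rewrite (addrC k) mulrC modzMDl.
case: ifP => _; last by rewrite mulr0.
by rewrite eeD LD addrC.
Qed.

Definition ph (b : int) : fseries R := fun n m => F b (n + m).

Lemma ph_H0 b : H0_rho_Z4 theta (ph b).
Proof.
split.
- move=> a; apply: funext => n; apply: funext => m.
  rewrite /lmul /rmul /rho_alg big_map; apply: eq_bigr => [[[p q] c]] _ /=.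
  rewrite /ph.
  have -> : n - q + (m - - p) = (n - p + (m - q)) + 2 * p by ring.
  rewrite FD -/L.
  transitivity (c * (L ^ (- (p * q)) * L ^ (- p * (n - q)) * L ^ (p * (n - p + (m - q) + p))) * F b (n - p + (m - q))); first by ring.
  rewrite !LD; congr (_ * L ^ _ * _); ring.
- apply: funext => p; apply: funext => q.
  rewrite /rho_ser /ph.
  have -> : p + q = (- q + p) + 2 * q by ring.
  rewrite FD -/L; congr (L ^ _ * _); ring.
Qed.

Lemma F00 : F 0 0 = 1. Proof. by rewrite /F /= expr0z. Qed.
Lemma F10 : F 1 0 = 0. Proof. by []. Qed.
Lemma F01 : F 0 1 = 0. Proof. by []. Qed.
Lemma F11 : F 1 1 = 1. Proof. by rewrite /F /= expr0z. Qed.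

Lemma span (phi : fseries R) : H0_rho theta phi ->
  forall n m, phi n m = phi 0 0 * ph 0 n m + phi 1 0 * ph 1 n m.
Proof.
move=> H.
have Hg : forall p q n m : int,
  L ^ (- (p * q)) * L ^ (- p * (n - q)) * phi (n - q) (m - - p)
  = L ^ ((m - q) * p) * phi (n - p) (m - q).
  move=> p q n m.
  have := congr1 (fun f => f n m) (H [:: ((p, q), 1)]).
  by rewrite /lmul /rmul /rho_alg /= !big_cons !big_nil /= !addr0 !mul1r.
have Hsh : forall a b, phi a b = phi (a + b) 0.
  move=> a b; have := Hg 0 b (a + b) b.
  have -> : a + b - b = a by ring.
  have -> : b - - 0 = b by ring.
  have -> : a + b - 0 = a + b by ring.
  have -> : b - b = 0 by ring.
  have -> : - (0 * b) = 0 :> int by ring.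
  have -> : - 0 * a = 0 :> int by ring.
  have -> : 0 * 0 = 0 :> int by ring.
  by rewrite !expr0z !mul1r.
have Hrec : forall k p, phi (k + 2 * p) 0 = L ^ (p * (k + p)) * phi k 0.
  move=> k p; have := Hg p 0 (k + p) 0.
  have -> : k + p - 0 = k + p by ring.
  have -> : 0 - - p = p by ring.
  have -> : k + p - p = k by ring.
  have -> : 0 - 0 = 0 :> int by ring.
  have -> : - (p * 0) = 0 :> int by ring.
  have -> : 0 * p = 0 :> int by ring.
  rewrite Hsh !expr0z !mul1r.
  have -> : k + p + p = k + 2 * p by ring.
  move=> E; rewrite -E mulrA LD.
  have -> : p * (k + p) + - p * (k + p) = 0 by ring.
  by rewrite expr0z mul1r.
move=> n m; rewrite Hsh /ph.
set k := n + m.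
have Ek : k = (k %% 2)%Z + 2 * (k %/ 2)%Z.
  by rewrite [LHS](divz_eq k 2) addrC mulrC.
rewrite Ek Hrec !FD.
set r := (k %% 2)%Z.
have : (0 <= r) && (r < 2).
  by rewrite /r modz_ge0 // ltz_pmod.
move=> /andP [h1 h2]; have [->|->] : r = 0 \/ r = 1 by lia.
- by rewrite F00 F10 !mulr0 mulr1 addr0 mulrC.
- rewrite F01 F11 !mulr0 mulr1 add0r -(add0r 1) -Hsh add0r.
  by rewrite mulrC.
Qed.

End Proof.

Theorem mainTheorem6 (R : realType) (theta : R) :
  @reals.irrational R theta ->
  exists phi1 phi2 : fseries R,
    H0_rho_Z4 theta phi1 /\ H0_rho_Z4 theta phi2 /\
    (forall phi : fseries R, H0_rho_Z4 theta phi ->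
       exists! c : R[i] * R[i],
         phi = (fun n m => c.1 * phi1 n m + c.2 * phi2 n m)).
Proof.
move=> _.
exists (@ph R theta 0), (@ph R theta 1).
split; first exact: ph_H0.
split; first exact: ph_H0.
move=> phi [H _].
exists (phi 0 0, phi 1 0); split.
  by apply: funext => n; apply: funext => m; rewrite (@span R theta phi H).
move=> [c1 c2] /= E.
have E0 := congr1 (fun f => f 0 0) E.
have E1 := congr1 (fun f => f 1 0) E.
rewrite /= /ph /= addr0 in E0 E1.
rewrite F00 F10 mulr1 mulr0 addr0 in E0.
rewrite F01 F11 mulr1 mulr0 add0r in E1.
by rewrite E0 E1.
Qed.
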